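(* Consider a generalized broadcast process with parameters $m$, $k$ and $M$. Suppose $S_1,\dots,S_{m'}$ is a partition of $\{1,\dots,m\}$ such that, writing $w^{(i)}=\sum_{j\in S_i}e_j$, for all $1\le i,i'\le m'$ and all $j,j'\in S_i$ we have $w^{(i')}\cdot Me_j=w^{(i')}\cdot Me_{j'}$. Let $M'$ be the $m'\times m'$ matrix with $M'_{i,i'}=w^{(i)}\cdot Me_j$ for any $j\in S_{i'}$. If there is a $\mathbf{TC}^0$ detection function family for the generalized broadcast process with parameters $(m',M')$ (and the same $k$), then there is a $\mathbf{TC}^0$ detection function family for the process with parameters $(m,M)$.
   Context: Generalized broadcast process with parameters $m$, $k$, $M$: $M$ is an $m\times m$ matrix with nonnegative entries whose columns sum to 1. On the complete $k$-ary tree of depth $d$, the root label is uniform in $\{1,\dots,m\}$, and each child of a vertex with label $j$ independently receives label $i$ with probability $M_{i,j}$. $X^{(r)}$ is the vector of labels at depth $r$; $e_j$ denotes the $j$-th standard basis vector. A detection function family is a family $f_d$ mapping $X^{(d)}$ to a label with $\mathbb{P}[f_d(X^{(d)})=X^{(0)}]\ge 1/m+\delta$ for some $\delta>0$ and all $d\ge d_0$. $\mathbf{TC}^0$: constant-depth polynomial-size circuits of unbounded fan-in threshold gates, labels encoded as fixed-length bit strings. *)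

(* Defs.v *)
From mathcomp Require Import all_boot all_order all_algebra.
Set Implicit Arguments. Unset Strict Implicit. Unset Printing Implicit Defensive.
Import Order.TTheory GRing.Theory Num.Theory.

(* A gate is a threshold gate over literals (wire, negated?) with      *)
(* repetitions allowed: it outputs 1 iff at least [gthr] of its        *)
(* literals are true.  (Constants, NOT, AND, OR, MAJ are special cases;*)
(* repetition of literals = polynomially bounded integer weights.)     *)
Inductive wire := WIn of nat | WGate of nat.
Record gate := Gate { glits : seq (wire * bool); gthr : nat }.
Record circuit := Circuit { cgates : seq gate; couts : seq wire }.

Definition wire_val (x vals : seq bool) (w : wire) : bool :=
  match w with WIn i => nth false x i | WGate j => nth false vals j end.
Definition lit_val (x vals : seq bool) (l : wire * bool) : bool :=
  wire_val x vals l.1 (+) l.2.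
Definition gate_val (x vals : seq bool) (g : gate) : bool :=
  gthr g <= count (lit_val x vals) (glits g).
Definition gate_vals (x : seq bool) (gs : seq gate) : seq bool :=
  foldl (fun vals g => rcons vals (gate_val x vals g)) [::] gs.
Definition circuit_eval (C : circuit) (x : seq bool) : seq bool :=
  map (wire_val x (gate_vals x (cgates C))) (couts C).

Definition wire_ok (n g : nat) (w : wire) : bool :=
  match w with WIn i => i < n | WGate j => j < g end.
Definition gate0 := Gate [::] 0.
Definition circuit_wf (n : nat) (C : circuit) : bool :=
  [forall i : 'I_(size (cgates C)),
     all (fun l => wire_ok n i l.1) (glits (nth gate0 (cgates C) i))]
  && all (wire_ok n (size (cgates C))) (couts C).

Definition wire_depth (ds : seq nat) (w : wire) : nat :=
  match w with WIn _ => 0 | WGate j => nth 0 ds j end.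
Definition gate_depths (gs : seq gate) : seq nat :=
  foldl (fun ds g => rcons ds (\max_(l <- glits g) wire_depth ds l.1).+1) [::] gs.
Definition circuit_depth (C : circuit) : nat :=
  \max_(d <- gate_depths (cgates C)) d.
Definition circuit_size (C : circuit) : nat :=
  size (cgates C) + sumn (map (fun g => size (glits g)) (cgates C)).

(* Labels are 'I_m (label i+1 of the paper is i).  The vertices at     *)
(* depth r are 'I_(k^r); the children of vertex u at depth r are the   *)
(* vertices u*k + i (i < k) at depth r+1, i.e. the parent of v is v/k. *)
(* M i j = probability that a child of a j-labelled vertex gets i.     *)
Notation gen k m r := {ffun 'I_(k ^ r) -> 'I_m}.

Lemma parent_proof (k r : nat) (v : 'I_(k ^ r.+1)) : v %/ k < k ^ r.
Proof.
case: k v => [|k] v; first by case: v; rewrite exp0n.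
by rewrite ltn_divLR // -expnSr.
Qed.
Definition parent (k r : nat) (v : 'I_(k ^ r.+1)) : 'I_(k ^ r) :=
  Ordinal (parent_proof v).

Local Open Scope ring_scope.

(* P[X^(r+1) = y | X^(r) = x] *)
Definition trans (R : realFieldType) (m k : nat) (M : 'M[R]_m) (r : nat)
  (x : gen k m r) (y : gen k m r.+1) : R :=
  \prod_(v : 'I_(k ^ r.+1)) M (y v) (x (parent v)).

(* joint M r j x = P[X^(0) = j, X^(r) = x] (root uniform on 'I_m) *)
Fixpoint joint (R : realFieldType) (m k : nat) (M : 'M[R]_m) (r : nat)
  : 'I_m -> gen k m r -> R :=
  match r return 'I_m -> gen k m r -> R with
  | 0 => fun j x => m%:R^-1 * (if [forall v, x v == j] then 1 else 0)
  | r'.+1 => fun j y => \sum_(x : gen k m r') @joint R m k M r' j x * trans M x y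
  end.

(* P[f(X^(d)) = X^(0)] *)
Definition success (R : realFieldType) (m k : nat) (M : 'M[R]_m) (d : nat)
  (f : gen k m d -> 'I_m) : R :=
  \sum_(j : 'I_m) \sum_(x : gen k m d) (if f x == j then joint M j x else 0).

Definition detection_family (R : realFieldType) (m k : nat) (M : 'M[R]_m)
  (f : forall d, gen k m d -> 'I_m) : Prop :=
  exists2 delta : R, 0 < delta &
    exists d0 : nat, forall d : nat, (d0 <= d)%N ->
      m%:R^-1 + delta <= success M (f d).

(* Encoding of labels as fixed-length bit strings: binary, little endian, *)
(* with up_log 2 m bits (the least b with m <= 2^b).                      *)
Definition nbits (b j : nat) : seq bool := [seq odd (j %/ 2 ^ i) | i <- iota 0 b].
Definition lab_bits (m j : nat) : seq bool := nbits (up_log 2 m) j.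
Definition encode (m k d : nat) (x : gen k m d) : seq bool :=
  flatten [seq lab_bits m (x v) | v <- enum 'I_(k ^ d)].

Definition in_TC0 (m k : nat) (f : forall d, gen k m d -> 'I_m) : Prop :=
  exists (c a : nat) (C : nat -> circuit), forall d : nat,
    let n := (k ^ d * up_log 2 m)%N in
    [/\ circuit_wf n (C d), (circuit_depth (C d) <= c)%N,
        (circuit_size (C d) <= n.+1 ^ a)%N &
        forall x : gen k m d, circuit_eval (C d) (encode x) = lab_bits m (f d x)].

Definition TC0_detection (R : realFieldType) (m k : nat) (M : 'M[R]_m) : Prop :=
  exists f : forall d, gen k m d -> 'I_m, detection_family M f /\ in_TC0 f.

(* Main.v *)
Require Import Defs.
From HB Require Import structures.
From mathcomp Require Import all_boot all_order all_algebra.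
From mathcomp Require Import zify.


Definition w2s w := match w with WIn i => inl i | WGate j => inr j end : nat + nat.
Definition s2w (s : nat + nat) := match s with inl i => WIn i | inr j => WGate j end.
Lemma w2sK : cancel w2s s2w. Proof. by case. Qed.
HB.instance Definition _ := Countable.copy wire (can_type w2sK).
Definition g2p (g : gate) := (glits g, gthr g).
Definition p2g (p : seq (wire * bool) * nat) := Gate p.1 p.2.
Lemma g2pK : cancel g2p p2g. Proof. by case. Qed.
HB.instance Definition _ := Countable.copy gate (can_type g2pK).

Definition inb (n : nat) (w : wire) : bool := if w is WIn i then i < n else true.
Definition gin (n : nat) (g : gate) : bool := all (fun l => inb n l.1) (glits g).

Definition shiftw (o : seq wire) (s : nat) (w : wire) : wire :=
  match w with WIn i => nth (WIn 0) o i | WGate j => WGate (s + j) end.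
Definition shiftg o s (g : gate) : gate :=
  Gate [seq (shiftw o s l.1, l.2) | l <- glits g] (gthr g).
Definition comp (C1 C2 : circuit) : circuit :=
  Circuit (cgates C1 ++ map (shiftg (couts C1) (size (cgates C1))) (cgates C2))
          (map (shiftw (couts C1) (size (cgates C1))) (couts C2)).

Definition gstep x vals g := rcons vals (gate_val x vals g).

Lemma gate_vals_rcons x gs g :
  gate_vals x (rcons gs g) = rcons (gate_vals x gs) (gate_val x (gate_vals x gs) g).
Proof. by rewrite /gate_vals foldl_rcons. Qed.

Lemma size_gate_vals x gs : size (gate_vals x gs) = size gs.
Proof.
elim/last_ind: gs => [//|gs g IH].
by rewrite gate_vals_rcons !size_rcons IH.
Qed.

Section Comp.
Variables (C1 C2 : circuit) (n1 : nat) (x : seq bool).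
Hypothesis O1ok : all (wire_ok n1 (size (cgates C1))) (couts C1).
Hypothesis G2in : all (gin (size (couts C1))) (cgates C2).
Hypothesis O2in : all (inb (size (couts C1))) (couts C2).

Let s := size (cgates C1).
Let V1 := gate_vals x (cgates C1).
Let y := circuit_eval C1 x.

Lemma wv_shift V w : inb (size (couts C1)) w ->
  wire_val x (V1 ++ V) (shiftw (couts C1) s w) = wire_val y V w.
Proof.
case: w => [i|j] /= H.
  have Hm : nth (WIn 0) (couts C1) i \in couts C1 by rewrite mem_nth.
  have := allP O1ok _ Hm.
  rewrite /y /circuit_eval (nth_map (WIn 0)) //.
  case: (nth (WIn 0) (couts C1) i) => [i'|j'] //= Hj.
  by rewrite nth_cat size_gate_vals Hj.
by rewrite nth_cat size_gate_vals /s ltnNge leq_addr /= addKn.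
Qed.

Lemma gv_shift V g : gin (size (couts C1)) g ->
  gate_val x (V1 ++ V) (shiftg (couts C1) s g) = gate_val y V g.
Proof.
move=> Hg; rewrite /gate_val /= count_map; congr (_ <= _).
apply: eq_in_count => l Hl /=.
by rewrite /lit_val /= wv_shift //; apply: (allP Hg).
Qed.

Lemma gvals_comp :
  gate_vals x (cgates (comp C1 C2)) = V1 ++ gate_vals y (cgates C2).
Proof.
rewrite /comp /=.
move: G2in; elim/last_ind: (cgates C2) => [|gs g IH].
  rewrite /= !cats0 //.
rewrite all_rcons => /andP [Hg Hgs].
rewrite map_rcons -rcons_cat gate_vals_rcons -/s IH // gate_vals_rcons -rcons_cat.
by rewrite gv_shift.
Qed.

Lemma comp_eval : circuit_eval (comp C1 C2) x = circuit_eval C2 y.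
Proof.
rewrite {1}/circuit_eval gvals_comp /= -map_comp /circuit_eval.

by apply/eq_in_map => w Hw /=; rewrite wv_shift //; apply: (allP O2in).
Qed.
End Comp.

Lemma wfP n C : circuit_wf n C <->
  (forall i, i < size (cgates C) ->
     all (fun l => wire_ok n i l.1) (glits (nth gate0 (cgates C) i)))
  /\ all (wire_ok n (size (cgates C))) (couts C).
Proof.
split.
  case/andP => /forallP H1 H2; split => // i Hi.
  exact: (H1 (Ordinal Hi)).
case=> H1 H2; apply/andP; split => //; apply/forallP => i; exact: H1.
Qed.

Lemma wire_ok_inb n g w : wire_ok n g w -> inb n w.
Proof. by case: w. Qed.

Lemma wf_gin n C : circuit_wf n C -> all (gin n) (cgates C).
Proof.
case/wfP => H1 _; apply/(all_nthP gate0) => i Hi.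
apply/allP => l Hl; apply: (@wire_ok_inb _ i).
exact: (allP (H1 i Hi)).
Qed.

Lemma wf_inb n C : circuit_wf n C -> all (inb n) (couts C).
Proof.
case/wfP => _ H2; apply/allP => w Hw; apply: wire_ok_inb; exact: (allP H2).
Qed.

Lemma wire_ok_mono n g g' w : g <= g' -> wire_ok n g w -> wire_ok n g' w.
Proof. by case: w => //= j Hg Hj; apply: leq_trans Hg. Qed.

Lemma comp_wf C1 C2 n1 : circuit_wf n1 C1 -> circuit_wf (size (couts C1)) C2 ->
  circuit_wf n1 (comp C1 C2).
Proof.
move=> /wfP [H11 H12] /wfP [H21 H22].
set s := size (cgates C1).
have wok g' w : wire_ok (size (couts C1)) g' w -> wire_ok n1 (s + g') (shiftw (couts C1) s w).
  case: w => [i|j] /= Hw; last by rewrite ltn_add2l.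
  apply: (@wire_ok_mono _ s); first exact: leq_addr.
  exact: (all_nthP (WIn 0) H12).
apply/wfP; split; last first.
  rewrite /= size_cat size_map all_map; apply/allP => w Hw /=.
  by apply: wok; apply: (allP H22).
move=> i; rewrite /= size_cat size_map => Hi.
rewrite nth_cat -/s; case: ltnP => Hs; first exact: H11.
have Hj : i - s < size (cgates C2) by rewrite ltn_subLR.
rewrite (nth_map gate0) //= all_map; apply/allP => l Hl /=.
have := wok _ _ (allP (H21 _ Hj) l Hl).
by rewrite subnKC.
Qed.

Lemma comp_size C1 C2 : circuit_size (comp C1 C2) = circuit_size C1 + circuit_size C2.
Proof.
rewrite /circuit_size /= size_cat size_map map_cat sumn_cat -map_comp.
have -> : [seq (size \o glits) (shiftg (couts C1) (size (cgates C1)) g) | g <- cgates C2]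
        = [seq size (glits g) | g <- cgates C2].
  by apply/eq_map => g /=; rewrite size_map.
lia.
Qed.

Definition dstep (ds : seq nat) (g : gate) :=
  rcons ds (\max_(l <- glits g) wire_depth ds l.1).+1.

Lemma gate_depths_rcons gs g :
  gate_depths (rcons gs g) = dstep (gate_depths gs) g.
Proof. by rewrite /gate_depths foldl_rcons. Qed.

Lemma size_gate_depths gs : size (gate_depths gs) = size gs.
Proof.
elim/last_ind: gs => [//|gs g IH].
by rewrite gate_depths_rcons /dstep !size_rcons IH.
Qed.

Lemma depth_nth gs j : nth 0 (gate_depths gs) j <= \max_(d <- gate_depths gs) d.
Proof.
case: (ltnP j (size (gate_depths gs))) => Hj; last by rewrite nth_default.
by apply: leq_bigmax_seq => //; apply: mem_nth.
Qed.

Section CompDepth.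
Variables (C1 C2 : circuit) (n1 : nat).
Hypothesis O1ok : all (wire_ok n1 (size (cgates C1))) (couts C1).
Hypothesis G2in : all (gin (size (couts C1))) (cgates C2).
Let s := size (cgates C1).
Let D1 := gate_depths (cgates C1).
Let c1 := circuit_depth C1.

Lemma out_depth E i : i < size (couts C1) ->
  wire_depth (D1 ++ E) (nth (WIn 0) (couts C1) i) <= c1.
Proof.
move=> Hi; have := (all_nthP (WIn 0) O1ok) i Hi.
case: (nth (WIn 0) (couts C1) i) => [i'|j] //= Hj.
rewrite nth_cat size_gate_depths Hj; exact: depth_nth.
Qed.

Lemma dcomp : exists E, [/\ gate_depths (cgates (comp C1 C2)) = D1 ++ E,
  size E = size (cgates C2) &
  forall j, nth 0 E j <= c1 + nth 0 (gate_depths (cgates C2)) j].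
Proof.
rewrite /comp /=.
move: G2in; elim/last_ind: (cgates C2) => [|gs g IH].
  by move=> _; exists [::]; rewrite /= !cats0; split => // j; rewrite nth_nil.
rewrite all_rcons => /andP [Hg Hgs].
have [E [HE HsE HjE]] := IH Hgs.
rewrite map_rcons -rcons_cat gate_depths_rcons -/s HE /dstep rcons_cat.
eexists; split; first reflexivity.
  by rewrite !size_rcons HsE.
move=> j; rewrite gate_depths_rcons /dstep !nth_rcons HsE size_gate_depths.
case: ltnP => Hj; first exact: HjE.
case: eqP => // _; rewrite addnS ltnS big_map.
apply/bigmax_leqP_seq => l Hl _.
have := allP Hg l Hl; rewrite /inb.
case El: l.1 => [i|j'] /= Hi.
  by apply: leq_trans (out_depth _ _ Hi) (leq_addr _ _).
rewrite nth_cat size_gate_depths -/s ltnNge leq_addr /= addKn.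
apply: leq_trans (HjE j') _; rewrite leq_add2l.
have := @leq_bigmax_seq _ _ xpredT (fun l : wire * bool => wire_depth (gate_depths gs) l.1) l Hl isT.
by rewrite El.
Qed.

Lemma comp_depth : circuit_depth (comp C1 C2) <= c1 + circuit_depth C2.
Proof.
have [E [HE HsE HjE]] := dcomp.
rewrite {1}/circuit_depth HE; apply/bigmax_leqP_seq => d; rewrite mem_cat => /orP [] Hd _.
  by apply: leq_trans (leq_addr _ _); apply: (@leq_bigmax_seq _ _ xpredT id d).
have /(nthP 0) [j Hj <-] := Hd.
apply: leq_trans (HjE j) _; rewrite leq_add2l; exact: depth_nth.
Qed.
End CompDepth.

Lemma map_mkseq' (T U : Type) (g : T -> U) f n : map g (mkseq f n) = mkseq (g \o f) n.
Proof. by rewrite /mkseq -map_comp. Qed.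
Lemma eq_in_mkseq' (T : Type) (f1 f2 : nat -> T) n :
  (forall i, i < n -> f1 i = f2 i) -> mkseq f1 n = mkseq f2 n.
Proof. by move=> H; apply/eq_in_map => i; rewrite mem_iota => /andP [_ /H]. Qed.

Definition inl n (g : gate) : bool :=
  all (fun l => if l.1 is WIn i then i < n else false) (glits g).
Definition layer (gl : seq gate) := Circuit gl (mkseq WGate (size gl)).

Lemma gate_val_in n x vals g : inl n g -> gate_val x vals g = gate_val x [::] g.
Proof.
move=> H; rewrite /gate_val; congr (_ <= _); apply: eq_in_count => l Hl.
by have := allP H l Hl; rewrite /lit_val; case: l.1.
Qed.

Lemma layer_vals n x gl : all (inl n) gl -> gate_vals x gl = map (gate_val x [::]) gl.
Proof.
elim/last_ind: gl => [//|gl g IH]; rewrite all_rcons => /andP [Hg Hgl].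
by rewrite gate_vals_rcons IH // map_rcons (@gate_val_in n x _ g Hg).
Qed.

Lemma layer_eval n x gl : all (inl n) gl ->
  circuit_eval (layer gl) x = map (gate_val x [::]) gl.
Proof.
move=> H; rewrite /circuit_eval /= map_mkseq' (@layer_vals n x gl H).
by rewrite -[RHS](mkseq_nth false) size_map.
Qed.

Lemma layer_wf n gl : all (inl n) gl -> circuit_wf n (layer gl).
Proof.
move=> H; apply/wfP; split => /=.
  move=> i Hi; have := (all_nthP gate0 H) i Hi; rewrite /inl.
  move/allP => H'; apply/allP => l Hl; have := H' l Hl; by case: l.1.
by apply/allP => w; rewrite /mkseq => /mapP [j]; rewrite mem_iota => /andP [_ Hj] ->.
Qed.

Lemma layer_depth n gl : all (inl n) gl -> circuit_depth (layer gl) <= 1.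
Proof.
move=> H; rewrite /circuit_depth /=.
suff : all (fun d => d <= 1) (gate_depths gl).
  by move/allP => H'; apply/bigmax_leqP_seq => d Hd _; apply: H'.
elim/last_ind: gl H => [//|gl g IH]; rewrite all_rcons => /andP [Hg Hgl].
rewrite gate_depths_rcons /dstep all_rcons IH // andbT ltnS.
apply/bigmax_leqP_seq => l Hl _; have := allP Hg l Hl; by case: l.1.
Qed.

Lemma layer_size gl : circuit_size (layer gl) = size gl + sumn (map (fun g => size (glits g)) gl).
Proof. by []. Qed.

Lemma nbitsS b a : nbits b.+1 a = odd a :: nbits b (a %/ 2).
Proof.
rewrite /nbits /= divn1 -(addn0 1) iotaDl -map_comp; congr (_ :: _).
by apply: eq_map => i /=; rewrite expnS divnMA add1n.
Qed.

Lemma nbits_inj b a c : a < 2 ^ b -> c < 2 ^ b -> nbits b a = nbits b c -> a = c.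
Proof.
elim: b a c => [|b IH] a c.
  by rewrite expn0 !ltnS !leqn0 => /eqP -> /eqP ->.
rewrite !nbitsS expnS => Ha Hc [Ho Hn].
have Ha' : a %/ 2 < 2 ^ b by rewrite ltn_divLR // mulnC.
have Hc' : c %/ 2 < 2 ^ b by rewrite ltn_divLR // mulnC.
have := IH _ _ Ha' Hc' Hn => Hd.
by rewrite (divn_eq a 2) (divn_eq c 2) Hd !modn2 Ho.
Qed.

Lemma size_nbits b a : size (nbits b a) = b.
Proof. by rewrite /nbits size_map size_iota. Qed.

Lemma nth_nbits b a i : i < b -> nth false (nbits b a) i = odd (a %/ 2 ^ i).
Proof. by move=> Hi; rewrite /nbits (nth_map 0) ?size_iota // nth_iota. Qed.

Lemma nth_flat (T : Type) (x0 : T) b (ss : seq (seq T)) v i :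
  all (fun s => size s == b) ss -> v < size ss -> i < b ->
  nth x0 (flatten ss) (v * b + i) = nth x0 (nth [::] ss v) i.
Proof.
elim: ss v => [//|s ss IH] [|v] /= /andP [/eqP Hs Hss] Hv Hi.
  by rewrite nth_cat Hs Hi.
rewrite nth_cat Hs mulSn -addnA ltnNge leq_addr /= addKn; exact: IH.
Qed.

Lemma size_flat (T : Type) b (ss : seq (seq T)) :
  all (fun s => size s == b) ss -> size (flatten ss) = size ss * b.
Proof.
elim: ss => [//|s ss IH] /= /andP [/eqP Hs Hss].
by rewrite size_cat IH // Hs mulSn.
Qed.

Lemma sumn_le (T : Type) (f : T -> nat) c s :
  (forall x, f x <= c) -> sumn (map f s) <= size s * c.
Proof.
move=> H; elim: s => [//|x s IH] /=; rewrite mulSn; exact: leq_add.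
Qed.

Lemma size_le_count (T : Type) (a : pred T) s : (size s <= count a s) = all a s.
Proof. by rewrite all_count eqn_leq count_size. Qed.

Definition flatbits b N (a : nat -> nat) := flatten [seq nbits b (a v) | v <- iota 0 N].

Lemma all_nbits_size b N a :
  all (fun s => size s == b) [seq nbits b (a v) | v <- iota 0 N].
Proof. by apply/allP => s /mapP [v _ ->]; rewrite size_nbits. Qed.

Lemma nth_flatbits b N a v i : v < N -> i < b ->
  nth false (flatbits b N a) (v * b + i) = odd (a v %/ 2 ^ i).
Proof.
move=> Hv Hi; rewrite /flatbits (@nth_flat _ false b _ v i (all_nbits_size b N a)) ?size_map ?size_iota //.
by rewrite (nth_map 0) ?size_iota // nth_iota // nth_nbits.
Qed.

Lemma size_flatbits b N a : size (flatbits b N a) = N * b.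
Proof. by rewrite /flatbits (@size_flat _ _ _ (all_nbits_size b N a)) size_map size_iota. Qed.

Definition decg b m q :=
  Gate [seq (WIn (q %/ m * b + i), ~~ odd ((q %% m) %/ 2 ^ i)) | i <- iota 0 b] b.
Definition dec N b m := mkseq (decg b m) (N * m).
Definition encg m b' (g : nat -> nat) q :=
  Gate [seq (WIn (q %/ b' * m + j), false) | j <- iota 0 m & odd (g j %/ 2 ^ (q %% b'))] 1.
Definition enc N m b' g := mkseq (encg m b' g) (N * b').

Lemma dec_inl N b m : all (inl (N * b)) (dec N b m).
Proof.
apply/allP => gt /mapP [q]; rewrite mem_iota /= => Hq ->.
apply/allP => l /mapP [i]; rewrite mem_iota /= => Hi -> /=.
have Hm : 0 < m by case: m Hq => //; rewrite muln0.
have : q %/ m < N by rewrite ltn_divLR.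
nia.
Qed.

Lemma enc_inl N m b' g : all (inl (N * m)) (enc N m b' g).
Proof.
apply/allP => gt /mapP [q]; rewrite mem_iota /= => Hq ->.
apply/allP => l /mapP [j]; rewrite mem_filter mem_iota /= => /andP [_ Hj] -> /=.
have Hb : 0 < b' by case: b' Hq => //; rewrite muln0.
have : q %/ b' < N by rewrite ltn_divLR.
nia.
Qed.

Lemma dec_val N b m (a : nat -> nat) q : m <= 2 ^ b -> (forall v, v < N -> a v < m) ->
  q < N * m ->
  gate_val (flatbits b N a) [::] (decg b m q) = (a (q %/ m) == q %% m).
Proof.
move=> Hmb Ha Hq.
have Hm : 0 < m by case: m Hq {Hmb Ha} => //; rewrite muln0.
have Hv : q %/ m < N by rewrite ltn_divLR.
rewrite /gate_val /decg /= -{1}(size_iota 0 b) -(size_map (fun i => (WIn (q %/ m * b + i), ~~ odd ((q %% m) %/ 2 ^ i))) (iota 0 b)).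
rewrite size_le_count all_map.
have E : forall i, i \in iota 0 b ->
   lit_val (flatbits b N a) [::] (WIn (q %/ m * b + i), ~~ odd ((q %% m) %/ 2 ^ i))
   = (odd (a (q %/ m) %/ 2 ^ i) == odd ((q %% m) %/ 2 ^ i)).
  move=> i; rewrite mem_iota /= => Hi.
  rewrite /lit_val /= nth_flatbits //.
  by case: (odd _); case: (odd _).
rewrite (eq_in_all E).
case: eqP => [-> | Hne]; first by apply/allP => i _.
apply/negP => /allP H; apply: Hne; apply: (@nbits_inj b).
- exact: leq_trans (Ha _ Hv) Hmb.
- exact: leq_trans (ltn_pmod _ Hm) Hmb.
- by apply/eq_in_map => i Hi; apply/eqP; apply: H.
Qed.

Lemma dec_eval N b m a : m <= 2 ^ b -> (forall v, v < N -> a v < m) ->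
  circuit_eval (layer (dec N b m)) (flatbits b N a)
  = mkseq (fun q => a (q %/ m) == q %% m) (N * m).
Proof.
move=> Hmb Ha; rewrite (@layer_eval _ _ _ (dec_inl N b m)) /dec map_mkseq'.
by apply: eq_in_mkseq' => q Hq /=; rewrite dec_val.
Qed.

Lemma enc_val N m b' g (a : nat -> nat) q : (forall v, v < N -> a v < m) -> q < N * b' ->
  gate_val (mkseq (fun q => a (q %/ m) == q %% m) (N * m)) [::] (encg m b' g q)
  = odd (g (a (q %/ b')) %/ 2 ^ (q %% b')).
Proof.
move=> Ha Hq.
have Hb : 0 < b' by case: b' Hq => //; rewrite muln0.
have Hv : q %/ b' < N by rewrite ltn_divLR.
have Hav := Ha _ Hv.
have Hm : 0 < m by apply: leq_ltn_trans Hav.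
rewrite /gate_val /encg /= count_map count_filter -has_count.
set t := q %% b'; set v := q %/ b'.
have E : forall j, j \in iota 0 m ->
  predI (preim (fun l => (WIn (v * m + l), false))
     (lit_val (mkseq (fun q => a (q %/ m) == q %% m) (N * m)) [::]))
     (fun j => odd (g j %/ 2 ^ t)) j = (a v == j) && odd (g j %/ 2 ^ t).
  move=> j; rewrite mem_iota /= => Hj.
  rewrite /lit_val /= addbF nth_mkseq; last nia.
  by rewrite divnMDl // modnMDl divn_small // addn0 modn_small.
rewrite (eq_in_has E).
apply/hasP; case: ifP => H.
  by exists (a v); [rewrite mem_iota | rewrite eqxx].
by case => j _ /andP [/eqP <-]; rewrite H.
Qed.

Lemma enc_eval N m b' g a : (forall v, v < N -> a v < m) ->
  circuit_eval (layer (enc N m b' g)) (mkseq (fun q => a (q %/ m) == q %% m) (N * m))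
  = flatbits b' N (fun v => g (a v)).
Proof.
move=> Ha; rewrite (@layer_eval _ _ _ (enc_inl N m b' g)) /enc map_mkseq'.
apply: (@eq_from_nth _ false); first by rewrite size_mkseq size_flatbits.
rewrite size_mkseq => q Hq; rewrite nth_mkseq //= enc_val //.
have Hb : 0 < b' by case: b' Hq {Ha} => //; rewrite muln0.
rewrite [in RHS](divn_eq q b') nth_flatbits //; first by rewrite ltn_divLR.
by rewrite ltn_mod.
Qed.

Definition recode N b m b' g := comp (layer (dec N b m)) (layer (enc N m b' g)).

Lemma inl_gin n gl : all (inl n) gl -> all (gin n) gl.
Proof.
move/allP => H; apply/allP => g /H /allP H'; apply/allP => l /H'.
by rewrite /inb; case: l.1.
Qed.

Lemma layer_outs_inb n gl : all (inb n) (couts (layer gl)).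
Proof. by apply/allP => w /mapP [j _ ->]. Qed.

Lemma size_couts_layer gl : size (couts (layer gl)) = size gl.
Proof. by rewrite /= size_mkseq. Qed.

Lemma recode_eval N b m b' g a : m <= 2 ^ b -> (forall v, v < N -> a v < m) ->
  circuit_eval (recode N b m b' g) (flatbits b N a) = flatbits b' N (fun v => g (a v)).
Proof.
move=> Hmb Ha; rewrite /recode.
have /wfP [_ H1] := @layer_wf _ _ (dec_inl N b m).
rewrite (@comp_eval _ _ _ _ H1).
- by rewrite dec_eval // enc_eval.
- by rewrite size_couts_layer size_mkseq; apply: inl_gin; apply: enc_inl.
- exact: layer_outs_inb.
Qed.

Lemma recode_wf N b m b' g : circuit_wf (N * b) (recode N b m b' g).
Proof.
apply: comp_wf; first exact: @layer_wf _ _ (dec_inl N b m).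
by rewrite size_couts_layer size_mkseq; apply: layer_wf; apply: enc_inl.
Qed.

Lemma recode_depth N b m b' g : circuit_depth (recode N b m b' g) <= 2.
Proof.
have /wfP [_ H1] := @layer_wf _ _ (dec_inl N b m).
apply: leq_trans (@comp_depth _ _ _ H1 _) _.
  by rewrite size_couts_layer size_mkseq; apply: inl_gin; apply: enc_inl.
have := @layer_depth _ _ (dec_inl N b m); have := @layer_depth _ _ (enc_inl N m b' g); lia.
Qed.

Lemma recode_size N b m b' g :
  circuit_size (recode N b m b' g) <= N * (m + m * b + b' + b' * m).
Proof.
rewrite comp_size !layer_size /dec /enc !size_mkseq.
have H1 : sumn [seq size (glits g0) | g0 <- mkseq (decg b m) (N * m)] <= N * m * b.
  rewrite map_mkseq' /mkseq; apply: leq_trans (@sumn_le _ _ b _ _) _; last by rewrite size_iota.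
  by move=> q; rewrite /decg /= size_map size_iota.
have H2 : sumn [seq size (glits g0) | g0 <- mkseq (encg m b' g) (N * b')] <= N * b' * m.
  rewrite map_mkseq' /mkseq; apply: leq_trans (@sumn_le _ _ m _ _) _; last by rewrite size_iota.
  by move=> q; rewrite /encg /= size_map size_filter (leq_trans (count_size _ _)) // size_iota.
nia.
Qed.

Lemma recode_outs N b m b' g : size (couts (recode N b m b' g)) = N * b'.
Proof. by rewrite /= size_map size_mkseq /enc size_mkseq. Qed.


Definition natf (n : nat) (h : 'I_n -> nat) (q : nat) : nat :=
  oapp h 0%N (insub q : option 'I_n).
Arguments natf {n} h q.

Lemma encode_flat m k d (x : gen k m d) :
  encode x = flatbits (up_log 2 m) (k ^ d) (natf (fun v => val (x v))).
Proof.
rewrite /encode /flatbits -val_enum_ord -map_comp; congr flatten.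
by apply: eq_map => v /=; rewrite /natf valK.
Qed.

Lemma natf_lt n (h : 'I_n -> nat) c q : (forall v, h v < c) -> q < n -> natf h q < c.
Proof. by move=> H Hq; rewrite /natf; case: insubP => [u _ _ /=|]; [apply: H | rewrite Hq]. Qed.

Lemma natf_val n (h : 'I_n -> nat) (v : 'I_n) : natf h v = h v.
Proof. by rewrite /natf valK. Qed.

Lemma natf_ord n (h : 'I_n -> nat) q (Hq : q < n) : natf h q = h (Ordinal Hq).
Proof.
rewrite /natf; case: insubP => [u _ Hu /=|]; last by rewrite Hq.
by congr h; apply: val_inj.
Qed.

Lemma flatbits_ext b N a1 a2 : (forall v, v < N -> a1 v = a2 v) ->
  flatbits b N a1 = flatbits b N a2.
Proof.
move=> H; rewrite /flatbits; congr flatten; apply/eq_in_map => v.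
by rewrite mem_iota => /andP [_ Hv]; rewrite H.
Qed.

Lemma expn_mono x y e : x <= y -> x ^ e <= y ^ e.
Proof. by move=> H; elim: e => [//|e IH]; rewrite !expnS leq_mul. Qed.


Import Order.TTheory GRing.Theory Num.Theory.
Local Open Scope ring_scope.

Definition pmap (m m' k r : nat) (p : 'I_m -> 'I_m') (x : gen k m r) : gen k m' r :=
  [ffun v => p (x v)].
Arguments pmap {m m' k r} p x.

Lemma success_eq (R : realFieldType) m k (M : 'M[R]_m) d (f : gen k m d -> 'I_m) :
  success M f = \sum_(x : gen k m d) joint M (f x) x.
Proof.
rewrite /success exchange_big /=; apply: eq_bigr => x _.
rewrite -big_mkcond /=.
rewrite (eq_bigl (fun j => j == f x)); last by move=> j; rewrite eq_sym.
by rewrite big_pred1_eq.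
Qed.

Lemma mass (R : realFieldType) m k (M : 'M[R]_m) :
  (forall j, \sum_i M i j = 1) ->
  forall r j, \sum_(x : gen k m r) joint M j x = m%:R^-1.
Proof.
move=> HM; elim => [|r IH] j /=.
  rewrite -mulr_sumr (bigD1 [ffun=> j]) //=.
  rewrite big1 => [|x Hx].
    have -> : [forall v, ([ffun=> j] : gen k m 0) v == j] by apply/forallP => v; rewrite ffunE.
    by rewrite addr0 mulr1.
  case: ifP => // /forallP H; case/eqP: Hx; apply/ffunP => v; rewrite ffunE.
  exact/eqP/H.
rewrite exchange_big /= -[RHS](IH j); apply: eq_bigr => x _.
rewrite -mulr_sumr /trans.
have -> : \sum_(y : gen k m r.+1) \prod_(v : 'I_(k ^ r.+1)) M (y v) (x (parent v)) = 1.
  rewrite -(bigA_distr_bigA (fun v i => M i (x (parent v)))) /=.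
  by apply: big1 => v _; apply: HM.
by rewrite mulr1.
Qed.

Section Lump.
Variables (R : realFieldType) (m m' k : nat) (M : 'M[R]_m) (p : 'I_m -> 'I_m') (M' : 'M[R]_m').
Hypothesis Hm : (0 < m)%N.
Hypothesis Hm' : (0 < m')%N.
Hypothesis HM' : forall (i i' : 'I_m') (j : 'I_m), p j = i' ->
     M' i i' = \sum_(l | p l == i) M l j.

Lemma trans_lump r (x : gen k m r) (y : gen k m' r.+1) :
  \sum_(z : gen k m r.+1 | pmap p z == y) trans M x z = trans M' (pmap p x) y.
Proof.
rewrite /trans.
rewrite (eq_bigr (fun v => \sum_(l | p l == y v) M l (x (parent v)))); last first.
  by move=> v _; rewrite ffunE (HM' (y v) _ _ (erefl _)).
rewrite (bigA_distr_big_dep (fun v l => p l == y v) (fun v l => M l (x (parent v)))).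
apply: eq_bigl => z; apply/eqP/familyP => [<- v|H].
  by rewrite ffunE unfold_in /=.
by apply/ffunP => v; rewrite ffunE; apply/eqP; have := H v; rewrite unfold_in.
Qed.

Lemma lump r j (y : gen k m' r) :
  \sum_(x : gen k m r | pmap p x == y) joint M j x
  = (m'%:R / m%:R) * joint M' (p j) y.
Proof.
have m0 : (m%:R : R) != 0 by rewrite pnatr_eq0 -lt0n.
have m0' : (m'%:R : R) != 0 by rewrite pnatr_eq0 -lt0n.
elim: r j y => [|r IH] j y /=.
  rewrite big_mkcond /= (bigD1 [ffun=> j]) //=.
  rewrite big1 => [|x Hx].
    have -> : [forall v, ([ffun=> j] : gen k m 0) v == j] by apply/forallP => v; rewrite ffunE.
    have -> : (pmap p [ffun=> j] == y) = [forall v, y v == p j].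
      apply/eqP/forallP => [<- v|H]; first by rewrite !ffunE.
      by apply/ffunP => v; rewrite !ffunE; apply/esym/eqP.
    rewrite addr0; case: ifP => _; last by rewrite !mulr0.
    by rewrite !mulr1 mulrAC mulfV // mul1r.
  case: ifP => // _; case: ifP; last by rewrite mulr0.
  move/forallP => H; case/eqP: Hx; apply/ffunP => v; rewrite ffunE; exact/eqP/H.
rewrite exchange_big /=.
rewrite (eq_bigr (fun x => joint M j x * trans M' (pmap p x) y)); last first.
  by move=> x _; rewrite -mulr_sumr trans_lump.
rewrite (partition_big (pmap p) xpredT) //=.
rewrite mulr_sumr; apply: eq_bigr => y' _.
rewrite (eq_bigr (fun x => joint M j x * trans M' y' y)); last first.
  by move=> x /eqP ->.
by rewrite -mulr_suml IH mulrA.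
Qed.

Lemma success_lump d (f' : gen k m' d -> 'I_m') (rep : 'I_m' -> 'I_m) :
  (forall i, p (rep i) = i) ->
  success M (fun x => rep (f' (pmap p x))) = (m'%:R / m%:R) * success M' f'.
Proof.
move=> Hrep; rewrite !success_eq.
rewrite (partition_big (pmap p) xpredT) //= mulr_sumr; apply: eq_bigr => y _.
rewrite (eq_bigr (fun x => joint M (rep (f' y)) x)); last by move=> x /eqP ->.
by rewrite lump Hrep.
Qed.
End Lump.

Lemma k0_success (R : realFieldType) m (M : 'M[R]_m) d (f : gen 0 m d.+1 -> 'I_m) :
  (forall j, \sum_i M i j = 1) -> success M f = m%:R^-1.
Proof.
move=> HM; rewrite success_eq.
have E : forall j (y : gen 0 m d.+1), joint M j y = m%:R^-1.
  move=> j y /=; rewrite -(@mass _ _ 0 _ HM d j); apply: eq_bigr => x _.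
  rewrite /trans big1 ?mulr1 // => v _.
  exfalso; have := ltn_ord v; by rewrite [in X in (_ < X)%N -> _]exp0n.
rewrite (eq_bigr (fun _ => m%:R^-1)); last by move=> y _; rewrite E.
rewrite sumr_const card_ffun.
have -> : #|'I_(0 ^ d.+1)| = 0%N by rewrite card_ord exp0n.
by rewrite expn0 mulr1n.
Qed.

Arguments comp_depth {C1 C2 n1}.
Arguments comp_eval {C1 C2 n1}.
Arguments comp_wf {C1 C2 n1}.
Arguments wf_gin {n C}.
Arguments wf_inb {n C}.
Local Open Scope ring_scope.

Theorem mainTheorem9 (R : realFieldType) (m m' k : nat)
  (M : 'M[R]_m) (p : 'I_m -> 'I_m') (M' : 'M[R]_m') :
  (0 < m)%N ->
  (forall i j, 0 <= M i j) ->
  (forall j, \sum_i M i j = 1) ->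
  (* S_i := [set j | p j = i] is a partition of 'I_m into nonempty blocks *)
  (forall i : 'I_m', exists j, p j = i) ->
  (forall (i i' : 'I_m') (j j' : 'I_m), p j = i -> p j' = i ->
     \sum_(l | p l == i') M l j = \sum_(l | p l == i') M l j') ->
  (forall (i i' : 'I_m') (j : 'I_m), p j = i' ->
     M' i i' = \sum_(l | p l == i) M l j) ->
  TC0_detection k M' -> TC0_detection k M.
Proof.
move=> Hm HM0 HMs Hsurj Hlump HM' [f' [[δ Hδ [d0 Hd0]] [c [a [C HC]]]]].
have Hm' : (0 < m')%N by case: (p (Ordinal Hm)) => i /= Hi; apply: leq_ltn_trans Hi.
pose j0 := Ordinal Hm.
pose rep (i : 'I_m') := odflt j0 [pick j | p j == i].
have Hrep : forall i, p (rep i) = i.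
  move=> i; rewrite /rep; case: pickP => [j /eqP //|H].
  have [j Hj] := Hsurj i; by have := H j; rewrite Hj eqxx.
have HM's : forall i', \sum_i M' i i' = 1.
  move=> i'; rewrite -(HMs (rep i')).
  rewrite (partition_big p xpredT) //=; apply: eq_bigr => i _.
  by rewrite (HM' i i' (rep i') (Hrep i')).
case: (posnP k) => [k0|kpos].
  subst k; exfalso.
  have := Hd0 d0.+1 (leqnSn _); rewrite k0_success // -{2}[m'%:R^-1]addr0 lerD2l.
  by rewrite leNgt Hδ.
pose f d (x : gen k m d) := rep (f' d (pmap p x)).
exists f; split.
  exists ((m'%:R / m%:R) * δ).
    by rewrite mulr_gt0 // divr_gt0 // ltr0n.
  exists d0 => d Hd; rewrite /f (@success_lump _ _ _ _ _ _ M' Hm Hm' HM' d (f' d) rep Hrep).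
  apply: le_trans (ler_wpM2l _ (Hd0 d Hd)); last first.
    by rewrite divr_ge0 // ler0n.
  rewrite mulrDr lerD2r le_eqVlt; apply/orP; left; apply/eqP.
  by rewrite mulrAC mulfV ?mul1r // pnatr_eq0 -lt0n.
rewrite /in_TC0.
have Hmm' : (m' <= m)%N.
  have := @leq_card _ _ rep; rewrite !card_ord; apply.
  by move=> i i' E; rewrite -(Hrep i) E Hrep.
have Hmb : (m <= 2 ^ up_log 2 m)%N := up_logP m (isT : (1 < 2)%N).
have Hmb' : (m' <= 2 ^ up_log 2 m')%N := up_logP m' (isT : (1 < 2)%N).
have Hbb : (up_log 2 m' <= up_log 2 m)%N := leq_up_log 2 Hmm'.
case: (ltnP 1 m) => [Hm2 | Hm1]; last first.
  have m1 : m = 1%N by lia.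
  exists 0%N, 0%N, (fun _ => Circuit [::] [::]) => d /=; split.
  - by apply/wfP; split.
  - by rewrite /circuit_depth /= big_nil.
  - by rewrite /circuit_size.
  - move=> x; rewrite /lab_bits.
    have -> : up_log 2 m = 0%N by rewrite m1 up_log1.
    by [].
have bpos : (0 < up_log 2 m)%N by rewrite up_log_gt0 Hm2.
set b := up_log 2 m; set b' := up_log 2 m'.
pose gp q := natf (fun j : 'I_m => val (p j)) q.
pose gr q := natf (fun i : 'I_m' => val (rep i)) q.
pose K1 := (m + m * b + b' + b' * m)%N; pose K2 := (m' + m' * b' + b + b * m')%N.
exists (2 + c + 2)%N, (a + 1 + (K1 + K2))%N,
  (fun d => comp (comp (recode (k ^ d) b m b' gp) (C d)) (recode 1 b' m' b gr)).
move=> d /=.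
move: (HC d) => /= [wf' dep' size' eval'].
set N := (k ^ d)%N.
have szC : size (couts (C d)) = b'.
  pose y : gen k m' d := [ffun=> Ordinal Hm'].
  by have := congr1 size (eval' y); rewrite size_map /lab_bits size_nbits.
have wfA := recode_wf N b m b' gp.
have wfAC : circuit_wf (N * b) (comp (recode N b m b' gp) (C d)).
  by apply: comp_wf => //; rewrite recode_outs.
have wfB : circuit_wf (size (couts (comp (recode N b m b' gp) (C d)))) (recode 1 b' m' b gr).
  by rewrite /= size_map szC -{1}(mul1n b'); apply: recode_wf.
have wfC : circuit_wf (size (couts (recode N b m b' gp))) (C d) by rewrite recode_outs.
have [_ O1] := (wfP _ _).1 wfA.
have [_ O2] := (wfP _ _).1 wfAC.
split.
- exact: comp_wf.
- apply: leq_trans (comp_depth O2 (wf_gin wfB)) _.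
  apply: leq_trans (leq_add (comp_depth O1 (wf_gin wfC)) (recode_depth 1 b' m' b gr)) _.
  have := recode_depth N b m b' gp; lia.
- have s1 := recode_size N b m b' gp; have s2 := recode_size 1 b' m' b gr.
  move: s1 s2.
  set R1 := circuit_size (recode N b m b' gp); set R2 := circuit_size (recode 1 b' m' b gr).
  move=> s1 s2.
  rewrite comp_size comp_size -/R1 -/R2.
  have s3 : ((N * b').+1 ^ a <= (N * b).+1 ^ a)%N by apply: expn_mono; rewrite ltnS leq_mul2l Hbb orbT.
  have Npos : (0 < N)%N by rewrite expn_gt0 kpos.
  have NX : (N <= N * b)%N by rewrite leq_pmulr.
  move: s3 size'; rewrite -/b -/b' -/N.
  set X := (N * b).+1.
  set A' := ((N * b').+1 ^ a)%N.
  set S := circuit_size (C d).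
  move=> s3 s4.
  have X2 : (1 < X)%N by rewrite ltnS; apply: leq_trans NX.
  have XA : (0 < X ^ a)%N by rewrite expn_gt0 (ltnW X2).
  have XB : (K1 + K2 < X ^ (K1 + K2))%N by apply: ltn_expl.
  have -> : (X ^ (a + 1 + (K1 + K2)) = X ^ a * X * X ^ (K1 + K2))%N by rewrite !expnD expn1.
  move: XA XB s3.
  set A := (X ^ a)%N; set B := (X ^ (K1 + K2))%N.
  move=> XA XB s3.
  have h1 : (A * X * B >= A * X * (K1 + K2).+1)%N by rewrite leq_mul2l XB orbT.
  have h2 : (A * X >= X)%N by rewrite -{1}(mul1n X) leq_mul2r XA orbT.
  have h3 : (A * X >= A)%N by rewrite leq_pmulr // (ltnW X2).
  apply: leq_trans _ h1.
  have NX' : (N <= X)%N by apply: leq_trans NX _.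
  have t1 : (N * K1 <= X * K1)%N by rewrite leq_mul2r NX' orbT.
  have t2 : (K2 <= X * K2)%N by rewrite leq_pmull // (ltnW X2).
  have t3 : (X * (K1 + K2) <= A * X * (K1 + K2))%N by rewrite leq_mul2r h2 orbT.
  rewrite mulnDr in t3.
  rewrite mulnSr mulnDr.
  move: t1 t2 t3 h3 s1 s2 s3 s4.
  move: (N * K1)%N (X * K1)%N (X * K2)%N (A * X * K1)%N (A * X * K2)%N (A * X)%N => *.
  lia.
- move=> x.
  rewrite (comp_eval _ O2 (wf_gin wfB) (wf_inb wfB)).
  rewrite (comp_eval _ O1 (wf_gin wfC) (wf_inb wfC)).
  rewrite encode_flat recode_eval //; last first.
    by move=> v Hv; apply: (natf_lt _ _ _ _ (fun w => ltn_ord (x w)) Hv).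
  have -> : flatbits b' N (fun v => gp (natf (fun v0 : 'I_N => val (x v0)) v))
            = encode (pmap p x).
    rewrite encode_flat; apply: flatbits_ext => v Hv.
    by rewrite (natf_ord _ _ _ Hv) (natf_ord _ _ _ Hv) /gp natf_val ffunE.
  rewrite eval'.
  have -> : lab_bits m' (f' d (pmap p x)) = flatbits b' 1 (fun _ => val (f' d (pmap p x))).
    by rewrite /flatbits /= cats0.
  rewrite recode_eval //; last by move=> v _; apply: ltn_ord.
  by rewrite /flatbits /= cats0 /gr natf_val.
Qed.
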